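(* Let $f: \mathbb{R}^n \to \mathbb{R}^n$ be topical and $h \in \mathbb{R}$. Then $f$ has an eigenvector with eigenvalue $h$ (i.e. $f(v) = v + h$ for some $v \in \mathbb{R}^n$) if and only if there exists $x \in \mathbb{R}^n$ such that $\|f^k(x) - kh\|_\infty$ is bounded as $k \to \infty$.
   Context: $f$ is topical if $f(x+h) = f(x)+h$ for all $h\in\mathbb{R}$ (scalar added to each coordinate) and $x\le y$ componentwise implies $f(x)\le f(y)$. $\|\cdot\|_\infty$ is the supremum norm. *)

(* Defs.v *)
From mathcomp Require Import all_boot all_order all_algebra.
From mathcomp Require Import reals.
Set Implicit Arguments. Unset Strict Implicit. Unset Printing Implicit Defensive.
Import Order.TTheory GRing.Theory Num.Theory.
Local Open Scope ring_scope.

Definition vec (R : realType) (n : nat) := 'I_n -> R.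

Definition vadds (R : realType) (n : nat) (x : vec R n) (h : R) : vec R n :=
  fun i => x i + h.

Definition vle (R : realType) (n : nat) (x y : vec R n) : Prop :=
  forall i, x i <= y i.

Definition topical (R : realType) (n : nat) (f : vec R n -> vec R n) : Prop :=
  (forall x h, f (vadds x h) = vadds (f x) h) /\
  (forall x y, vle x y -> vle (f x) (f y)).

Definition supnorm (R : realType) (n : nat) (x : vec R n) : R :=
  \big[Num.max/0]_(i < n) `|x i|.

(* Main.v *)
Require Import Defs.
From mathcomp Require Import all_boot all_order all_algebra.
From mathcomp Require Import reals.
From mathcomp Require Import boolp classical_sets.
From mathcomp Require Import lra.
Import Order.TTheory GRing.Theory Num.Theory.
Local Open Scope ring_scope.
Set Implicit Arguments.

Section Aux.
Variable R : realType.
Variable n : nat.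

Lemma supnorm_ge (v : vec R n) i : `|v i| <= supnorm v.
Proof. by rewrite /supnorm (bigD1 i) //= le_max lexx. Qed.

Lemma supnorm_le (v : vec R n) B : 0 <= B -> (forall i, `|v i| <= B) -> supnorm v <= B.
Proof.
move=> B0 H; rewrite /supnorm; elim/big_ind: _ => // x y hx hy.
by rewrite ge_max hx hy.
Qed.

Lemma inf_lbw (E : set R) L r : (forall s, E s -> L <= s) -> E r -> inf E <= r.
Proof. by move=> HL Er; apply: ge_inf => //; exists L. Qed.
Arguments inf_lbw {E L r}.

Lemma inf_glbw (E : set R) x r : E r -> (forall s, E s -> x <= s) -> x <= inf E.
Proof. by move=> Er H; apply: lb_le_inf => //; exists r. Qed.
Arguments inf_glbw {E x} r.

Lemma inf_adhw (E : set R) L r e : 0 < e -> E r -> (forall s, E s -> L <= s) ->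
  exists s, E s /\ s < inf E + e.
Proof.
move=> e0 Er HL; have [s Es hs] := @inf_adherent R E e e0 (conj (ex_intro _ r Er) (ex_intro _ L HL)).
by exists s.
Qed.
Arguments inf_adhw {E L} r {e}.

Lemma sup_ubw (E : set R) U r : (forall s, E s -> s <= U) -> E r -> r <= sup E.
Proof. by move=> HU Er; apply: sup_upper_bound => //; split; [exists r | exists U]. Qed.
Arguments sup_ubw {E U r}.

Lemma sup_lubw (E : set R) x r : E r -> (forall s, E s -> s <= x) -> sup E <= x.
Proof. by move=> Er H; apply: ge_sup => //; exists r. Qed.
Arguments sup_lubw {E x} r.

Lemma sup_adhw (E : set R) U r e : 0 < e -> E r -> (forall s, E s -> s <= U) ->
  exists s, E s /\ sup E - e < s.
Proof.
move=> e0 Er HU; have [s Es hs] := @sup_adherent R E e e0 (conj (ex_intro _ r Er) (ex_intro _ U HU)).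
by exists s.
Qed.
Arguments sup_adhw {E U} r {e}.

Lemma le_eps (a b : R) : (forall e, 0 < e -> a <= b + e) -> a <= b.
Proof.
move=> H; rewrite leNgt; apply/negP => ba.
have := H ((a - b) / 2%:R); rewrite divr_gt0 ?subr_gt0 ?ltr0n //.
move=> /(_ isT); lra.
Qed.

Lemma uniform (P : 'I_n -> nat -> Prop) :
  (forall i m m', P i m -> (m <= m')%N -> P i m') ->
  (forall i, exists m, P i m) -> exists m, forall i, P i m.
Proof.
move=> mono ex.
suff : forall s : seq 'I_n, exists m, forall i, i \in s -> P i m.
  by case/(_ (enum 'I_n)) => m Hm; exists m => i; apply: Hm; rewrite mem_enum.
elim=> [|a s [m Hm]]; first by exists 0%N.
have [ma Ha] := ex a; exists (maxn m ma) => i; rewrite inE => /orP [/eqP -> | Hi].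
  by apply: mono Ha _; rewrite leq_maxr.
by apply: mono (Hm i Hi) _; rewrite leq_maxl.
Qed.
Arguments uniform {P}.

Variable g : vec R n -> vec R n.
Hypothesis gt : topical g.

Lemma g_mono x y : vle x y -> vle (g x) (g y).
Proof. exact: gt.2. Qed.

Lemma g_hom x c : g (vadds x c) = vadds (g x) c.
Proof. exact: gt.1. Qed.

Lemma g_nonexp x y c : vle x (vadds y c) -> vle (g x) (vadds (g y) c).
Proof. by move=> H; rewrite -g_hom; apply: g_mono. Qed.

Lemma iter_mono k x y : vle x y -> vle (iter k g x) (iter k g y).
Proof. by elim: k => //= k IH H; apply: g_mono; apply: IH. Qed.

Lemma iter_hom k x c : iter k g (vadds x c) = vadds (iter k g x) c.
Proof. by elim: k => //= k ->; rewrite g_hom. Qed.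

Lemma fixpt x B : (forall k i, `|iter k g x i| <= B) -> exists w, g w = w.
Proof.
move=> HB.
pose G k := iter k g x.
have GB k i : - B <= G k i /\ G k i <= B by have := HB k i; rewrite ler_norml => /andP.
pose Ys m i := (fun r : R => exists2 k, (m <= k)%N & r = G k i) : set R.
pose Y m i := inf (Ys m i).
have YsLB m i s : Ys m i s -> - B <= s by case=> k _ ->; case: (GB k i).
have Y1 m k i : (m <= k)%N -> Y m i <= G k i.
  by move=> mk; apply: inf_lbw (YsLB m i) _; exists k.
have Y2 m i : - B <= Y m i.
  by apply: (inf_glbw (G m i)); [exists m | apply: YsLB].
have Y3 m m' i : (m <= m')%N -> Y m i <= Y m' i.
  move=> mm'; apply: (inf_glbw (G m' i)); first by exists m'.
  by move=> s [k km ->]; apply: Y1; apply: leq_trans km.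
have Y4 m : vle (g (Y m)) (Y m.+1).
  move=> i; apply: (inf_glbw (G m.+1 i)); first by exists m.+1.
  move=> s [[|k] //= km ->]; apply: g_mono => j; exact: Y1.
have YU m i : Y m i <= B by apply: le_trans (Y1 m m i (leqnn _)) _; case: (GB m i).
pose Zs i := (fun r : R => exists m, r = Y m i) : set R.
pose Z i := sup (Zs i).
have ZsU i s : Zs i s -> s <= B by case=> m ->.
have Z1 m i : Y m i <= Z i by apply: sup_ubw (ZsU i) _; exists m.
have Z3 i : - B <= Z i by apply: le_trans (Z1 0%N i).
have Z4 : vle (g Z) Z.
  move=> i; apply: le_eps => e e0.
  have [m Hm] : exists m, forall j, Z j - e < Y m j.
    apply: (uniform (P := fun j m => Z j - e < Y m j)).
      by move=> j m m' H mm'; apply: lt_le_trans H (Y3 _ _ _ mm').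
    move=> j; have [s [[m ->] hs]] := sup_adhw (Y 0%N j) e0 (ex_intro _ 0%N erefl) (ZsU j).
    by exists m.
  have : vle Z (vadds (Y m) e) by move=> j; rewrite /vadds; have := Hm j; lra.
  move=> /g_nonexp /(_ i); rewrite /vadds => h1.
  apply: le_trans h1 _; rewrite lerD2r; apply: le_trans (Y4 m i) _; exact: Z1.
pose b k := iter k g Z.
have bdec k : vle (b k.+1) (b k).
  by elim: k => [|k IH] //=; apply: g_mono.
have bLB k i : - (B + B + B) <= b k i.
  have : vle (vadds x (- (B + B))) Z.
    move=> j; rewrite /vadds; have := GB 0%N j; have := Z3 j; rewrite /G /=; lra.
  move=> /(iter_mono k) /(_ i); rewrite iter_hom /vadds => h.
  apply: le_trans h; have := GB k i; rewrite /G; lra.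
pose Ws i := (fun r : R => exists k, r = b k i) : set R.
pose W i := inf (Ws i).
have WsL i s : Ws i s -> - (B + B + B) <= s by case=> k ->.
have W1 k i : W i <= b k i by apply: inf_lbw (WsL i) _; exists k.
have bdec' k k' i : (k <= k')%N -> b k' i <= b k i.
  move=> /subnKC <-; elim: (k' - k)%N => [|d IH]; first by rewrite addn0.
  by rewrite addnS; apply: le_trans (bdec _ i) IH.
exists W; apply: funext => i; apply/eqP; rewrite eq_le; apply/andP; split.
  apply: (inf_glbw (b 0%N i)); first by exists 0%N.
  move=> s [k ->]; apply: le_trans (bdec k i); apply: g_mono => j; exact: W1.
apply: le_eps => e e0.
have [k Hk] : exists k, forall j, b k j < W j + e.
  apply: (uniform (P := fun j k => b k j < W j + e)).
    by move=> j m m' H mm'; apply: le_lt_trans H; apply: bdec'.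
  move=> j; have [s [[k ->] hs]] := inf_adhw (b 0%N j) e0 (ex_intro _ 0%N erefl) (WsL j).
  by exists k.
have : vle (b k) (vadds W e) by move=> j; rewrite /vadds; apply: ltW.
move=> /g_nonexp /(_ i); rewrite /vadds => h.
by apply: le_trans (W1 k.+1 i) h.
Qed.

End Aux.

Theorem lemma3p1 (R : realType) (n : nat) (f : vec R n -> vec R n) (h : R) :
  topical f ->
  ((exists v : vec R n, f v = vadds v h) <->
   (exists x : vec R n, exists B : R, forall k : nat,
      supnorm (vadds (iter k f x) (- (k%:R * h))) <= B)).
Proof.
move=> [fh fm]; split.
  move=> [v fv]; exists v, (supnorm v) => k.
  suff -> : vadds (iter k f v) (- (k%:R * h)) = v by [].
  have -> : iter k f v = vadds v (k%:R * h).
    elim: k => [|k IH] /=.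
      by apply: funext => i; rewrite /vadds mul0r addr0.
    rewrite IH fh fv; apply: funext => i; rewrite /vadds mulrSr; lra.
  by apply: funext => i; rewrite /vadds addrK.
move=> [x [B HB]].
pose g := fun y : vec R n => vadds (f y) (- h).
have gt : topical g.
  split.
    by move=> y c; rewrite /g fh; apply: funext => i; rewrite /vadds; lra.
  by move=> y z yz i; rewrite /g /vadds lerD2r; apply: fm.
have itg k : iter k g x = vadds (iter k f x) (- (k%:R * h)).
  elim: k => [|k IH] /=.
    by apply: funext => i; rewrite /vadds mul0r oppr0 addr0.
  rewrite IH /g.
  rewrite fh; apply: funext => i; rewrite /vadds mulrSr; lra.
have HB' : forall k i, `|iter k g x i| <= B.
  by move=> k i; rewrite itg; apply: le_trans (supnorm_ge _ i) (HB k).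
have [w gw] := @fixpt R n g gt x B HB'.
exists w; apply: funext => i.
have := congr1 (fun v => v i) gw; rewrite /g /vadds /= => <-; lra.
Qed.
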